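(* Let $\mathcal{T}$ be an MPQ-tree of an interval graph $G=(V,E)$, and let $x\ne y$ with $node(x)=node(y)=Q$ a Q-node with sections $S_1,\dots,S_k$. Suppose $x$ and $y$ have exactly one common section $S_i$ in $Q$, and the set $V_i$ of vertices of the subtree $T_i$ induces a clique in $G$ (possibly $V_i=\emptyset$). Then $(x,y)$ is an interval edge.
   Context: Graphs are finite and simple; for $G=(V,E)$ and $e\in E$, $G-e=(V,E\setminus\{e\})$. An edge $(x,y)\in E$ of an interval graph $G$ is an interval edge if $G-(x,y)$ is an interval graph. An MPQ-tree of an interval graph $G=(V,E)$, $V=\{1,\dots,n\}$, is a rooted plane tree whose nodes are P-nodes and Q-nodes. Each P-node carries a (possibly empty) set of vertices. A Q-node has $k\ge 3$ ordered positions $1,\dots,k$; position $i$ carries a set $S_i\subseteq V$ (the $i$-th section) and a child subtree $T_i$, which may be empty. Every vertex $v$ is assigned to exactly one node $node(v)$: either $v$ lies in the set of the P-node $node(v)$, or $node(v)$ is a Q-node and $v$ lies exactly in the sections $S_{l(v)},\dots,S_{r(v)}$ of it, with $l(v)<r(v)$. For a node with child subtrees $T_1,\dots,T_k$, $V_i$ denotes the set of vertices assigned to nodes of $T_i$ ($V_i=\emptyset$ if $T_i$ is empty). The maximal cliques of $G$ are in bijection with the descending paths from the root which at a P-node continue into one of its children (stopping if there is none) and at a Q-node choose a position $i$ and continue into $T_i$ (stopping if $T_i$ is empty); the clique is the union of the sets of the visited P-nodes and the chosen sections. Reading these cliques left to right gives a linear order of the maximal cliques, and the orders obtained this way after arbitrarily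 permuting children of P-nodes and reversing the positions of Q-nodes are exactly the orders of the maximal cliques of $G$ in which the cliques containing any fixed vertex are consecutive. Moreover, for every Q-node with sections $S_1,\dots,S_k$: (a) $V_1\neq\emptyset$ and $V_k\ne\emptyset$; (b) $S_1\subseteq S_2$ and $S_k\subseteq S_{k-1}$; (c) $S_{i-1}\cap S_i\neq\emptyset$ for $2\le i\le k$; (d) $S_{i-1}\neq S_i$ for $2\le i\le k$; (e) $(S_i\cap S_{i+1})\setminus S_1\neq\emptyset$ and $(S_{i-1}\cap S_i)\setminus S_k\neq\emptyset$ for $2\le i\le k-1$; (f) $(S_{i-1}\cup V_{i-1})\setminus S_i\neq\emptyset$ and $(S_i\cup V_i)\setminus S_{i-1}\neq\emptyset$ for $2\le i\le k$; and further (g) no empty P-node has an empty P-node as its parent, (h) no P-node has exactly one child whose root is a P-node, (i) every child subtree of a P-node is nonempty. *)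

(* Defs.v *)
From mathcomp Require Import all_boot.
Set Implicit Arguments. Unset Strict Implicit. Unset Printing Implicit Defensive.

Section Graphs.
Variable T : finType.

(* A simple graph on the finite vertex type T is a symmetric irreflexive
   relation g : rel T (hypotheses stated in the theorem). *)

Definition remove_edge (g : rel T) (x y : T) : rel T :=
  fun u v => g u v && ~~ (((u == x) && (v == y)) || ((u == y) && (v == x))).

(* Interval graph: intersection graph of closed intervals [l v, r v]
   (integer endpoints suffice for finite graphs). *)
Definition is_interval_graph (g : rel T) : Prop :=
  exists (l r : T -> nat), (forall v, l v <= r v) /\
    (forall u v, u != v -> g u v = (l u <= r v) && (l v <= r u)).

Definition interval_edge (g : rel T) (x y : T) : Prop :=
  g x y /\ is_interval_graph (remove_edge g x y).

Definition is_clique (g : rel T) (C : {set T}) : Prop :=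
  forall u v, u \in C -> v \in C -> u != v -> g u v.

Definition is_max_clique (g : rel T) (C : {set T}) : Prop :=
  is_clique g C /\ forall C', is_clique g C' -> C \subset C' -> C' = C.

End Graphs.

(* A P-node carries a set of
   vertices and an ordered list of children; a Q-node carries its sections
   S_1..S_k together with the (possibly empty = None) child subtrees T_i. *)
Inductive mtree (T : finType) : Type :=
| PNode : {set T} -> seq (mtree T) -> mtree T
| QNode : seq ({set T} * option (mtree T)) -> mtree T.

Arguments PNode {T}.
Arguments QNode {T}.

Section Trees.
Variable T : finType.

Fixpoint vset (t : mtree T) : {set T} :=
  match t with
  | PNode X ch => X :|: foldr (fun c acc => vset c :|: acc) set0 ch
  | QNode secs => foldr (fun st acc =>
        st.1 :|: (match st.2 with None => set0 | Some c => vset c end) :|: acc)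
        set0 secs
  end.

Definition vset_opt (o : option (mtree T)) : {set T} :=
  match o with None => set0 | Some c => vset c end.

Fixpoint nodes (t : mtree T) : seq (mtree T) :=
  match t with
  | PNode X ch => t :: flatten (map nodes ch)
  | QNode secs => t :: flatten (map (fun st =>
        match st.2 with None => [::] | Some c => nodes c end) secs)
  end.

Definition is_node (t N : mtree T) : Prop :=
  exists2 i, i < size (nodes t) & nth (PNode set0 [::]) (nodes t) i = N.

(* the cliques associated with the descending paths, left to right *)
Fixpoint cliques (t : mtree T) : seq {set T} :=
  match t with
  | PNode X ch =>
      if ch is [::] then [:: X]
      else flatten (map (fun c => [seq X :|: C | C <- cliques c]) ch)
  | QNode secs =>
      flatten (map (fun st =>
        match st.2 with
        | None => [:: st.1]
        | Some c => [seq st.1 :|: C | C <- cliques c]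
        end) secs)
  end.

Definition prod_lists (A : Type) (ls : seq (seq A)) : seq (seq A) :=
  foldr (fun l acc => [seq x :: r | x <- l, r <- acc]) [:: [::]] ls.

(* all trees obtained by permuting children of P-nodes and reversing
   Q-nodes (recursively) *)
Fixpoint variants (t : mtree T) : seq (mtree T) :=
  match t with
  | PNode X ch =>
      [seq PNode X (map (nth (PNode set0 [::]) c) p)
         | c <- prod_lists (map variants ch),
           p <- permutations (iota 0 (size ch))]
  | QNode secs =>
      flatten [seq [:: QNode cs; QNode (rev cs)]
         | cs <- prod_lists (map (fun st =>
                   match st.2 with
                   | None => [:: (st.1, None)]
                   | Some c => [seq (st.1, Some c') | c' <- variants c]
                   end) secs)]
  end.

Definition consecutive (s : seq {set T}) : Prop :=
  forall v i j k, i <= j -> j <= k -> k < size s ->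
    v \in nth set0 s i -> v \in nth set0 s k -> v \in nth set0 s j.

Definition occurs (v : T) (N : mtree T) : bool :=
  match N with
  | PNode X _ => v \in X
  | QNode secs => has (fun st : {set T} * option (mtree T) => v \in st.1) secs
  end.

Definition sec (secs : seq ({set T} * option (mtree T))) (i : nat) : {set T} :=
  nth set0 (map fst secs) i.

Definition subV (secs : seq ({set T} * option (mtree T))) (i : nat) : {set T} :=
  vset_opt (nth None (map snd secs) i).

Definition is_emptyP (N : mtree T) : bool :=
  if N is PNode X _ then X == set0 else false.

Definition is_P (N : mtree T) : bool :=
  if N is PNode _ _ then true else false.

(* local conditions on a node; indices are 0-based: sections 0..k-1 *)
Definition node_ok (N : mtree T) : Prop :=
  match N with
  | PNode X ch =>
      (X == set0 -> forall c, c \in map is_emptyP ch -> c = false)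
      /\ ~ (exists c, ch = [:: c] /\ is_P c)
      /\ (forall c, c \in map vset ch -> c != set0)
  | QNode secs =>
      let k := size secs in
      3 <= k
      /\ subV secs 0 != set0 /\ subV secs k.-1 != set0
      /\ sec secs 0 \subset sec secs 1
                 /\ sec secs k.-1 \subset sec secs k.-2
      /\ (forall i, 1 <= i < k -> sec secs i.-1 :&: sec secs i != set0)
      /\ (forall i, 1 <= i < k -> sec secs i.-1 != sec secs i)
      /\ (forall i, 1 <= i <= k - 2 ->
             (sec secs i :&: sec secs i.+1) :\: sec secs 0 != set0
             /\ (sec secs i.-1 :&: sec secs i) :\: sec secs k.-1 != set0)
      /\ (forall i, 1 <= i < k ->
             (sec secs i.-1 :|: subV secs i.-1) :\: sec secs i != set0
             /\ (sec secs i :|: subV secs i) :\: sec secs i.-1 != set0)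
  end.

Definition is_MPQ_tree (g : rel T) (t : mtree T) : Prop :=
  (forall v, count (occurs v) (nodes t) = 1)
  /\ (forall v secs, is_node t (QNode secs) -> occurs v (QNode secs) ->
        exists l r, l < r < size secs /\
          forall i, i < size secs -> (v \in sec secs i) = (l <= i <= r))
  (* bijection between descending paths and maximal cliques *)
  /\ uniq (cliques t)
  /\ (forall C, C \in cliques t <-> is_max_clique g C)
  /\ (forall s, s \in map cliques (variants t) <->
                (perm_eq s (cliques t) /\ consecutive s))
  /\ (forall N, is_node t N -> node_ok N).

End Trees.

(* Main.v *)
Require Import Defs.
From mathcomp Require Import all_boot zify.
From Stdlib Require List.
Set Implicit Arguments. Unset Strict Implicit. Unset Printing Implicit Defensive.

Lemma In_map A B (f : A -> B) a l : List.In a l -> List.In (f a) (map f l).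
Proof. elim: l => //= b l IH [->|H]; [left|right; apply IH]; done. Qed.

Lemma In_cat A (z : A) l1 l2 : List.In z (l1 ++ l2) <-> List.In z l1 \/ List.In z l2.
Proof. elim: l1 => /= [|a l1 IH]; first by split; [right|case]. rewrite IH; tauto. Qed.

Lemma In_flatten_map A B (F : A -> seq B) z l :
  List.In z (flatten (map F l)) <-> exists a, List.In a l /\ List.In z (F a).
Proof.
elim: l => /= [|a l IH]; first by split => // -[? []].
rewrite In_cat IH; split.
- case=> [H|[b [H1 H2]]]; [exists a | exists b]; tauto.
- case=> b [[<-|H1] H2]; [left|right; exists b]; tauto.
Qed.

Lemma mem_flatten_map A (B : eqType) (F : A -> seq B) z l :
  z \in flatten (map F l) <-> exists a, List.In a l /\ z \in F a.
Proof.
elim: l => /= [|a l IH]; first by split => // -[? []].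
rewrite mem_cat; split.
- case/orP=> [H|/IH [b [H1 H2]]]; [exists a | exists b]; tauto.
- case=> b [[<-|H1] H2]; apply/orP; [left|right; apply/IH; exists b]; tauto.
Qed.

Lemma memIn (A : eqType) (x : A) s : x \in s -> List.In x s.
Proof. elim: s => //= a s IH; rewrite inE => /orP [/eqP ->|/IH]; tauto. Qed.

Lemma Inmem (A : eqType) (x : A) s : List.In x s -> x \in s.
Proof. elim: s => //= a s IH [->|/IH]; rewrite inE ?eqxx // => ->; by rewrite orbT. Qed.

Lemma count_In A (p : pred A) a l : List.In a l -> p a -> 0 < count p l.
Proof. elim: l => //= b l IH [->|H] pa; first by rewrite pa. have := IH H pa; lia. Qed.

Lemma has_In A (p : pred A) a l : List.In a l -> p a -> has p l.
Proof. by move=> H pa; rewrite has_count (count_In H pa). Qed.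

Lemma sumn_In A (f : A -> nat) a l : List.In a l -> f a <= sumn (map f l).
Proof. elim: l => //= b l IH [->|H]; first lia. have := IH H; lia. Qed.

Lemma sumn_In2 A (f : A -> nat) a b l : List.In a l -> List.In b l ->
  0 < f a -> 0 < f b -> sumn (map f l) <= 1 -> a = b.
Proof.
elim: l => //= c l IH [<-|Ha] [<-|Hb] fa fb s //.
- have := sumn_In f Hb; lia.
- have := sumn_In f Ha; lia.
- apply: IH => //; lia.
Qed.

Lemma In_nth A (d : A) x l : List.In x l -> exists2 i, i < size l & nth d l i = x.
Proof.
elim: l => //= a l IH [->|/IH [i Hi E]]; first by exists 0.
by exists i.+1.
Qed.

Lemma nth_In A (d : A) l i : i < size l -> List.In (nth d l i) l.
Proof. elim: l i => //= a l IH [|i] /= H; [left|right; apply: IH] => //. Qed.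

Section Ind.
Variable T : finType.
Variable P : mtree T -> Prop.
Hypothesis HP : forall X ch, (forall c, List.In c ch -> P c) -> P (PNode X ch).
Hypothesis HQ : forall secs, (forall st c, List.In st secs -> st.2 = Some c -> P c) -> P (QNode secs).
Lemma mtree_ind' : forall t, P t.
Proof.
fix IH 1 => -[X ch|secs].
- apply: HP. move: ch. fix IHl 1 => -[|c0 ch] c /=; first by case.
  case=> [<-|H]; first exact: IH.
  exact: IHl ch c H.
- apply: HQ. move: secs. fix IHl 1 => -[|[S0 o0] secs] st c /=; first by case.
  case=> [<-|H] /= E.
  + move: E; case: o0 => [c0|].
    case=> <-. exact: IH.
    move=> E'; discriminate E'.
  + exact: IHl secs st c H E.
Qed.
End Ind.


Section Tree.
Variable T : finType.
Implicit Types (t c : mtree T) (v : T).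

Lemma vsetP_P v X ch : v \in vset (PNode X ch) <->
  v \in X \/ exists c, List.In c ch /\ v \in vset c.
Proof.
rewrite /= in_setU; split.
- case/orP=> [->|H]; first by left. right.
  elim: ch H => //= [|c ch IH]; first by rewrite in_set0.
  rewrite in_setU => /orP [H|/IH [c' [H1 H2]]]; [exists c|exists c']; tauto.
- case=> [Hv|]; first by rewrite Hv.
  case=> c [Hc Hv]; apply/orP; right.
  elim: ch Hc => //= c' ch IH [E|H]; rewrite in_setU; first by subst; rewrite Hv.
  by rewrite IH ?orbT.
Qed.

Lemma vsetP_Q v secs : v \in vset (QNode secs) <->
  exists st, List.In st secs /\ (v \in st.1 \/ v \in vset_opt st.2).
Proof.
rewrite /=; split.
- elim: secs => //= [|st secs IH]; first by rewrite in_set0.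
  rewrite !in_setU -orbA => /orP [H|/orP [H|/IH [s' [H1 H2]]]].
  + by exists st; tauto.
  + by exists st; tauto.
  + by exists s'; tauto.
- case=> st [Hs Hv]; elim: secs Hs => //= s' secs IH [E|H]; rewrite !in_setU.
  + by subst; case: Hv => ->; rewrite ?orbT.
  + by rewrite IH ?orbT.
Qed.

Lemma cliques_sub t C : C \in cliques t -> C \subset vset t.
Proof.
elim/mtree_ind': t C => [X ch IH|secs IH] C /=.
- case: ch IH => [|c0 ch] IH.
  + by rewrite inE => /eqP ->; rewrite subsetUl.
  + move/mem_flatten_map=> [c [Hc /mapP [C' HC' ->]]].
    apply/subsetP=> v; rewrite in_setU => /orP [Hv|Hv]; apply/vsetP_P; first by left.
    right; exists c; split => //. exact: (subsetP (IH c Hc C' HC')).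
- move/mem_flatten_map=> [[S o] [Hs HC]].
  apply/subsetP=> v Hv; apply/vsetP_Q; exists (S, o); split => //=.
  move: HC; case: o Hs => [c|] Hs /=.
  + move/mapP=> [C' HC' E]; subst C; move: Hv; rewrite in_setU => /orP [->|Hv]; first by left.
    right; exact: (subsetP (IH _ c Hs erefl C' HC')).
  + by rewrite inE => /eqP E; subst C; left.
Qed.

Lemma vset_occ t v : v \in vset t -> 0 < count (occurs v) (nodes t).
Proof.
elim/mtree_ind': t => [X ch IH|secs IH].
- case/vsetP_P=> [Hv|[c [Hc Hv]]] /=; first by rewrite Hv.
  rewrite count_flatten -map_comp.
  have := sumn_In (fun c => count (occurs v) (nodes c)) Hc; have := IH c Hc Hv; simpl.
  move=> H1 H2; apply: leq_trans H1 _; apply: leq_trans H2 _; exact: leq_addl.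
- case/vsetP_Q=> [[S o] [Hs [Hv|Hv]]] /=.
  + by rewrite (has_In (p := fun st : {set T} * option (mtree T) => v \in st.1) Hs Hv).
  + case: o Hv Hs => [c|] //= Hv Hs; last by rewrite in_set0 in Hv.
    rewrite count_flatten -map_comp.
    have := sumn_In (fun st : {set T} * option (mtree T) =>
       count (occurs v) (match st.2 with None => [::] | Some c => nodes c end)) Hs.
    have := IH _ c Hs erefl Hv. simpl.
    move=> H1 H2; apply: leq_trans H1 _; apply: leq_trans H2 _; exact: leq_addl.
Qed.

Definition qne (N : mtree T) := if N is QNode secs then (if secs is [::] then false else true) else true.

Lemma cliques_ne t : (forall M, List.In M (nodes t) -> qne M) -> exists C, C \in cliques t.
Proof.
elim/mtree_ind': t => [X ch IH|secs IH] Hq.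
- case: ch IH Hq => [|c0 ch] IH Hq /=; first by exists X; rewrite inE.
  have [C HC] : exists C, C \in cliques c0.
    apply: (IH c0); first by left.
    move=> M HM; apply: Hq; right; apply/In_flatten_map; exists c0; split => //; by left.
  exists (X :|: C); rewrite mem_cat; apply/orP; left; exact: map_f.
- have := Hq (QNode secs) (or_introl erefl); rewrite /=.
  case: secs IH Hq => [|[S o] secs] IH Hq Hne //=.
  case: o IH Hq Hne => [c|] IH Hq Hne /=. 2:{ by exists S; exact: mem_head. }
  have [C HC] : exists C, C \in cliques c.
    apply: (IH _ c (or_introl erefl) erefl).
    move=> M HM; apply: Hq; right; apply/In_cat; by left.
  exists (S :|: C); rewrite mem_cat; apply/orP; left; exact: map_f.
Qed.

Lemma In_prod A (ls : seq (seq A)) (r : seq A) :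
  size r = size ls -> (forall k, k < size r -> forall d, List.In (nth d r k) (nth [::] ls k)) ->
  List.In r (prod_lists ls).
Proof.
elim: ls r => [|l ls IH] [|a r] //= Hs H; first by left.
case: Hs => Hs.
apply/In_flatten_map; exists a; split; first exact: (H 0 erefl a).
apply: In_map; apply: IH => // k Hk d; exact: (H k.+1 Hk d).
Qed.

Lemma In_variants t : List.In t (variants t).
Proof.
elim/mtree_ind': t => [X ch IH|secs IH] /=.
- apply/In_flatten_map; exists ch; split.
  + apply: In_prod; first by rewrite size_map.
    move=> k Hk d; rewrite (nth_map (PNode set0 [::])) // (set_nth_default (PNode set0 [::]) d Hk).
    apply: IH; exact: nth_In.
  + have {1}-> : ch = map (nth (PNode set0 [::]) ch) (iota 0 (size ch)) by rewrite -[LHS](mkseq_nth (PNode set0 [::])).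

    apply: (In_map (fun p => PNode X (map (nth (PNode set0 [::]) ch) p))).
    apply: memIn; by rewrite mem_permutations.
- apply/In_flatten_map; exists secs; split; last by left.
  apply: In_prod; first by rewrite size_map.
  move=> k Hk d; rewrite (nth_map (set0, None)) // (set_nth_default (set0, None) d Hk).
  have Hs := nth_In (set0, None) Hk.
  case E: (nth (set0, None) secs k) Hs => [S [c|]] Hs /=; last by left.
  apply: (In_map (fun c' => (S, Some c'))). exact: (IH _ c Hs erefl).
Qed.

Lemma cliques_consec g t : is_MPQ_tree g t -> consecutive (cliques t).
Proof.
case=> _ [_ [_ [_ [H _]]]].
have /H [] // : cliques t \in map (@cliques T) (variants t).
apply: Inmem; apply: In_map; exact: In_variants.
Qed.
End Tree.


Lemma count_flat_ge (A B : Type) (p : pred B) (F : A -> seq B) a l :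
  List.In a l -> count p (F a) <= count p (flatten (map F l)).
Proof. move=> H; rewrite count_flatten; apply: sumn_In; exact: In_map. Qed.

Lemma count_flat_uniq (A B : Type) (p : pred B) (F : A -> seq B) a b l :
  List.In a l -> List.In b l -> 0 < count p (F a) -> 0 < count p (F b) ->
  count p (flatten (map F l)) <= 1 -> a = b.
Proof.
move=> Ha Hb H1 H2; rewrite count_flatten -map_comp => H.
exact: (sumn_In2 (f := count p \o F) Ha Hb).
Qed.

Section Decomp.
Variable T : finType.
Variable secs : seq ({set T} * option (mtree T)).
Variable W : {set T}.
Hypothesis HW : forall v, v \in W -> occurs v (QNode secs).

Definition Fn (st : {set T} * option (mtree T)) :=
  match st.2 with None => [::] | Some c => nodes c end.
Definition Gc (st : {set T} * option (mtree T)) :=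
  match st.2 with None => [:: st.1] | Some c => [seq st.1 :|: C | C <- cliques c] end.
Definition Gp (X : {set T}) (c : mtree T) := [seq X :|: C | C <- cliques c].

Lemma nodesQ s : nodes (QNode s) = QNode s :: flatten (map Fn s). Proof. by []. Qed.
Lemma nodesP X ch : nodes (PNode X ch) = PNode X ch :: flatten (map (@nodes T) ch). Proof. by []. Qed.
Lemma cliquesQ s : cliques (QNode s) = flatten (map Gc s). Proof. by []. Qed.
Lemma cliquesP X c ch : cliques (PNode X (c :: ch)) = flatten (map (Gp X) (c :: ch)). Proof. by []. Qed.

Definition decomp_concl (t : mtree T) :=
  exists A : {set T}, (forall v, v \in W -> v \notin A) /\
  (forall K, K \in cliques t -> (exists2 v, v \in W & v \in K) ->
     exists j (C : {set T}), [/\ j < size secs, (forall v, v \in W -> v \notin C),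
                     C \subset subV secs j & K = A :|: sec secs j :|: C]) /\
  (forall j, j < size secs -> exists C : {set T}, [/\ (forall v, v \in W -> v \notin C),
                C \subset subV secs j & A :|: sec secs j :|: C \in cliques t]).

Lemma decomp_base :
  (forall v, v \in W -> count (occurs v) (nodes (QNode secs)) = 1) ->
  (forall M, List.In M (nodes (QNode secs)) -> qne M) -> decomp_concl (QNode secs).
Proof.
move=> Hc Hq.
have Hnot : forall st c, List.In st secs -> st.2 = Some c -> forall v, v \in W -> v \notin vset c.
  move=> st c Hs Ec v Hv; apply/negP => Hvc.
  have := Hc v Hv; rewrite nodesQ /=; move: (HW Hv) => /= ->.
  have E1 : Fn st = nodes c by rewrite /Fn Ec.
  have := count_flat_ge (occurs v) Fn Hs; rewrite E1.
  have := vset_occ Hvc. lia.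
exists set0; split; first by move=> v _; rewrite in_set0.
split.
- move=> K; rewrite cliquesQ => /mem_flatten_map [st [Hs HK]] _.
  have [j Hj Ej] := In_nth (set0, None) Hs.
  have Esec : sec secs j = st.1 by rewrite /sec (nth_map (set0, None)) // Ej.
  have Esub : subV secs j = vset_opt st.2 by rewrite /subV (nth_map (set0, None)) // Ej.
  exists j; move: HK; rewrite /Gc; case Est: st.2 => [c|] HK.
  + case/mapP: HK => C HC ->; exists C; split => //.
    * move=> v Hv; apply/negP=> HvC; move: (Hnot st c Hs Est v Hv).
      by rewrite (subsetP (cliques_sub HC)).
    * by rewrite Esub Est /=; apply: cliques_sub.
    * by rewrite set0U Esec.
  + exists set0; split => //; first by move=> v _; rewrite in_set0.
    * exact: sub0set.
    * by move: HK; rewrite inE => /eqP ->; rewrite set0U setU0 Esec.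
- move=> j Hj; set st := nth (set0, None) secs j.
  have Hs : List.In st secs by apply: nth_In.
  have Esec : sec secs j = st.1 by rewrite /sec (nth_map (set0, None)).
  have Esub : subV secs j = vset_opt st.2 by rewrite /subV (nth_map (set0, None)).
  rewrite Esec Esub set0U cliquesQ.
  case Est: st.2 => [c|] /=.
  + have [C HC] : exists C, C \in cliques c.
      apply: cliques_ne => M HM; apply: Hq; rewrite nodesQ; right.
      apply/In_flatten_map; exists st; split => //; by rewrite /Fn Est.
    exists C; split.
    * move=> v Hv; apply/negP=> HvC; move: (Hnot st c Hs Est v Hv).
      by rewrite (subsetP (cliques_sub HC)).
    * exact: cliques_sub.
    * apply/mem_flatten_map; exists st; split => //; rewrite /Gc Est; exact: map_f.
  + exists set0; split; first by move=> v _; rewrite in_set0.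
    * exact: sub0set.
    * rewrite setU0; apply/mem_flatten_map; exists st; split => //; rewrite /Gc Est; exact: mem_head.
Qed.

Lemma decomp t : List.In (QNode secs) (nodes t) ->
  (forall v, v \in W -> count (occurs v) (nodes t) = 1) ->
  (forall M, List.In M (nodes t) -> qne M) -> decomp_concl t.
Proof.
elim/mtree_ind': t => [X ch IH|secs' IH] HN Hc Hq.
- rewrite nodesP in HN Hq Hc; case: HN => [E|HN]; first discriminate E.
  move/In_flatten_map: HN => [c [Hch HNc]].
  have Hv1 : forall v, v \in W -> count (occurs v) (nodes c) = 1 /\ v \notin X /\
       count (occurs v) (flatten (map (@nodes T) ch)) <= 1.
    move=> v Hv; have := Hc v Hv; rewrite /=.
    have := count_flat_ge (occurs v) (@nodes T) Hch.
    have := count_In HNc (HW Hv).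
    case: (v \in X) => /=; lia.
  have [Ac [HA [D1 D2]]] : decomp_concl c.
    apply: IH => //; first by move=> v /Hv1 [].
    move=> M HM; apply: Hq; right; apply/In_flatten_map; by exists c.
  have Ecl : cliques (PNode X ch) = flatten (map (Gp X) ch).
    by case: ch {IH Hq Hc Hv1} Hch => [[]|c0 ch' _].
  exists (X :|: Ac); split.
    move=> v Hv; rewrite in_setU negb_or (HA v Hv) andbT; by case: (Hv1 v Hv) => _ [].
  split.
  + move=> K; rewrite Ecl => /mem_flatten_map [c' [Hc' HK]] [v Hv HvK].
    case/mapP: HK => C' HC' EK; subst K.
    have HvC' : v \in C'.
      move: HvK; rewrite in_setU; case: (Hv1 v Hv) => _ [/negbTE -> _] //.
    have Ec' : c' = c.
      apply: (count_flat_uniq (p := occurs v) (F := @nodes T) Hc' Hch).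
      * apply: vset_occ; exact: (subsetP (cliques_sub HC')).
      * by case: (Hv1 v Hv) => ->.
      * by case: (Hv1 v Hv) => _ [].
    subst c'.
    have [j [C [Hj HCW HCs EC']]] := D1 C' HC' (ex_intro2 _ _ v Hv HvC').
    exists j, C; split => //. by rewrite EC' !setUA.
  + move=> j Hj; have [C [HCW HCs HKc]] := D2 j Hj.
    exists C; split => //; rewrite Ecl; apply/mem_flatten_map; exists c; split => //.
    rewrite -!setUA; apply: map_f; by rewrite setUA.
- rewrite nodesQ in HN Hq Hc; case: HN => [E|HN].
    case: E => E; subst secs'; apply: decomp_base => //.
  move/In_flatten_map: HN => [[S o] [Hs HNc]].
  case: o Hs HNc => [c|] Hs HNc; last by case: HNc.
  have E1 : Fn (S, Some c) = nodes c by [].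
  rewrite E1 in HNc.
  have Hv1 : forall v, v \in W -> count (occurs v) (nodes c) = 1 /\
       (forall st', List.In st' secs' -> v \notin st'.1) /\
       count (occurs v) (flatten (map Fn secs')) <= 1.
    move=> v Hv; have := Hc v Hv; rewrite /=.
    have := count_flat_ge (occurs v) Fn Hs; rewrite E1.
    have := count_In HNc (HW Hv).
    case Eh: (has (fun st0 : {set T} * option (mtree T) => v \in st0.1) secs') => /=.
      lia.
    move=> H1 H2 H3; split; first lia. split; last lia.
    move=> st' Hst'; apply/negP => Hvs.
    by rewrite (has_In (p := fun st0 : {set T} * option (mtree T) => v \in st0.1) Hst' Hvs) in Eh.
  have [Ac [HA [D1 D2]]] : decomp_concl c.
    apply: (IH _ c Hs erefl) => //; first by move=> v /Hv1 [].
    move=> M HM; apply: Hq; right; apply/In_flatten_map; by exists (S, Some c).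
  exists (S :|: Ac); split.
    move=> v Hv; rewrite in_setU negb_or (HA v Hv) andbT.
    by case: (Hv1 v Hv) => _ [H _]; apply: (H _ Hs).
  split.
  + move=> K; rewrite cliquesQ => /mem_flatten_map [[S' o'] [Hs' HK]] [v Hv HvK].
    case: (Hv1 v Hv) => Hcnt [Hnsec Hle].
    have HvS' := Hnsec _ Hs'; rewrite /= in HvS'.
    case: o' Hs' HK => [c'|] Hs' HK; last first.
      by move: HK; rewrite /Gc /= inE => /eqP E; subst K; rewrite HvK in HvS'.
    case/mapP: HK => C' HC' EK; subst K.
    have HvC' : v \in C' by move: HvK; rewrite in_setU (negbTE HvS').
    have Ec' : (S', Some c') = (S, Some c).
      apply: (count_flat_uniq (p := occurs v) (F := Fn) Hs' Hs) => //.
      * apply: vset_occ; exact: (subsetP (cliques_sub HC')).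
      * by rewrite E1 Hcnt.
    case: Ec' => ES Ec; subst S' c'.
    have [j [C [Hj HCW HCs EC']]] := D1 C' HC' (ex_intro2 _ _ v Hv HvC').
    exists j, C; split => //. by rewrite EC' !setUA.
  + move=> j Hj; have [C [HCW HCs HKc]] := D2 j Hj.
    exists C; split => //; rewrite cliquesQ; apply/mem_flatten_map; exists (S, Some c); split => //.
    rewrite /Gc /= -!setUA; apply: map_f; by rewrite setUA.
Qed.
End Decomp.


Section G.
Variable T : finType.
Implicit Types (g : rel T) (s : seq {set T}).

Definition cliqueb g (D : {set T}) :=
  [forall u, forall v, (u \in D) ==> (v \in D) ==> (u != v) ==> g u v].

Lemma cliqueP g D : reflect (is_clique g D) (cliqueb g D).
Proof.
apply: (iffP forallP) => H.
- move=> u v Hu Hv Huv; have := forallP (H u) v; by rewrite Hu Hv Huv.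
- move=> u; apply/forallP => v; apply/implyP => Hu; apply/implyP => Hv; apply/implyP; exact: H.
Qed.

Lemma max_ext g C : is_clique g C -> exists K, is_max_clique g K /\ C \subset K.
Proof.
move=> /cliqueP HC.
have HP : cliqueb g C && (C \subset C) by rewrite HC subxx.
case: (@arg_maxnP _ C (fun D => cliqueb g D && (C \subset D)) (fun D => #|D|) HP).
move=> K /andP [HK HCK] Hmax; exists K; split => //; split; first exact/cliqueP.
move=> C' /cliqueP HC' HKC'.
have := Hmax C'; rewrite HC' (subset_trans HCK HKC') => /(_ isT) Hle.
apply/eqP; rewrite eq_sym eqEcard HKC' /=; exact: Hle.
Qed.

Section Rep.
Variable s : seq {set T}.
Hypothesis Hcons : consecutive s.

Definition loR v := find (fun K : {set T} => v \in K) s.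
Definition hiR v := size s - (find (fun K : {set T} => v \in K) (rev s)).+1.

Lemma range v j : has (fun K : {set T} => v \in K) s -> j < size s ->
  (v \in nth set0 s j) = (loR v <= j <= hiR v).
Proof.
move=> Hh Hj.
have Hlo : loR v < size s by rewrite /loR -has_find.
have Hlov : v \in nth set0 s (loR v) by apply: (nth_find set0 Hh).
have Hhr : has (fun K : {set T} => v \in K) (rev s) by rewrite has_rev.
have Hf : find (fun K : {set T} => v \in K) (rev s) < size s by rewrite -size_rev -has_find.
have Hhiv : v \in nth set0 s (hiR v).
  have := nth_find set0 Hhr; rewrite nth_rev //.
have Hhi : hiR v < size s by rewrite /hiR; lia.
apply/idP/idP.
- move=> Hv; apply/andP; split.
  + rewrite leqNgt; apply/negP => H; have := before_find set0 H; by rewrite Hv.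
  + rewrite leqNgt; apply/negP => H.
    have H' : size s - j.+1 < find (fun K : {set T} => v \in K) (rev s) by move: H; rewrite /hiR; lia.
    have := before_find set0 H'; rewrite nth_rev; last lia.
    have -> : size s - (size s - j.+1).+1 = j by lia.
    by rewrite Hv.
- case/andP => H1 H2. exact: (Hcons H1 H2 Hhi Hlov Hhiv).
Qed.

Lemma lo_le_hi v : has (fun K : {set T} => v \in K) s -> loR v <= hiR v.
Proof.
move=> Hh. have Hlo : loR v < size s by rewrite /loR -has_find.
have := range Hh Hlo; rewrite (nth_find set0 Hh) => /esym /andP [] //.
Qed.

Lemma hi_lt v : has (fun K : {set T} => v \in K) s -> hiR v < size s.
Proof.
move=> Hh. have Hhr : has (fun K : {set T} => v \in K) (rev s) by rewrite has_rev.
have Hf : find (fun K : {set T} => v \in K) (rev s) < size s by rewrite -size_rev -has_find.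
rewrite /hiR; lia.
Qed.
End Rep.
End G.


Section E.
Variable T : finType.
Implicit Types (g : rel T) (s : seq {set T}).

Lemma rep_adj g s : consecutive s -> (forall K, K \in s -> is_clique g K) ->
  (forall u v, u != v -> g u v -> exists2 K, K \in s & (u \in K) && (v \in K)) ->
  (forall v, has (fun K : {set T} => v \in K) s) ->
  forall u v, u != v -> g u v = (loR s u <= hiR s v) && (loR s v <= hiR s u).
Proof.
move=> Hcons Hcl Hcov Hall u v Huv.
have Ru := range Hcons (Hall u); have Rv := range Hcons (Hall v).
have Hu1 := lo_le_hi Hcons (Hall u); have Hv1 := lo_le_hi Hcons (Hall v).
have Hu2 := hi_lt (Hall u); have Hv2 := hi_lt (Hall v).
apply/idP/idP.
- move=> /(Hcov _ _ Huv) [K HK /andP [HuK HvK]].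
  have Hj : index K s < size s by rewrite index_mem.
  move: HuK HvK; rewrite -(nth_index set0 HK) (Ru _ Hj) (Rv _ Hj).
  move=> /andP [? ?] /andP [? ?]; apply/andP; split; lia.
- move=> /andP [H1 H2].
  case: (leqP (loR s u) (loR s v)) => H3.
  + have Hj : loR s v < size s by lia.
    apply: (Hcl (nth set0 s (loR s v))) => //; first exact: mem_nth.
    * rewrite (Ru _ Hj); apply/andP; split; lia.
    * rewrite (Rv _ Hj); apply/andP; split; lia.
  + have Hj : loR s u < size s by lia.
    apply: (Hcl (nth set0 s (loR s u))) => //; first exact: mem_nth.
    * rewrite (Ru _ Hj); apply/andP; split; lia.
    * rewrite (Rv _ Hj); apply/andP; split; lia.
Qed.

Lemma double_rep g (l r : T -> nat) x y : x != y -> (forall v, l v <= r v) ->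
  (forall u v, u != v -> g u v = (l u <= r v) && (l v <= r u)) -> r x = l y ->
  is_interval_graph (remove_edge g x y).
Proof.
move=> xy Hlr Hg Exy.
exists (fun v => if v == y then (2 * l v).+1 else 2 * l v).
exists (fun v => if v == x then 2 * r v else (2 * r v).+1).
split.
- move=> v; have := Hlr v; case: (v =P y) => [Ev|_]; case: (v =P x) => [Ev'|_] //=; try lia.
  by subst; rewrite eqxx in xy.
- move=> u v Huv; rewrite /remove_edge Hg //.
  have := Hlr u; have := Hlr v.
  case: (u =P x) => [Eu|Nu]; case: (v =P y) => [Ev|Nv]; case: (u =P y) => [Eu'|Nu'];
  case: (v =P x) => [Ev'|Nv'] /=; subst; rewrite ?eqxx in xy Huv *; try done; try lia.
Qed.

Lemma remove_edge_sym g x y : is_interval_graph (remove_edge g y x) -> is_interval_graph (remove_edge g x y).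
Proof.
case=> l [r [H1 H2]]; exists l, r; split => // u v Huv.
rewrite -H2 // /remove_edge; congr (_ && ~~ _); by rewrite orbC.
Qed.
End E.


Lemma arith lx hx ly hy a jx jy :
  (forall j, (lx <= j <= hx) && (ly <= j <= hy) -> j = a) ->
  lx <= a <= hx -> ly <= a <= hy -> lx <= jx <= hx -> ~~ (ly <= jx <= hy) ->
  ly <= jy <= hy -> ~~ (lx <= jy <= hx) -> hx = ly \/ hy = lx.
Proof.
move=> H H1 H2 H3 H4 H5 H6.
have E1 : maxn lx ly = a by apply: H; apply/andP; split; lia.
have E2 : minn hx hy = a by apply: H; apply/andP; split; lia.
lia.
Qed.

Unset Implicit Arguments.
Theorem mainTheorem5 (T : finType) (g : rel T)
  (g_sym : symmetric g) (g_irr : irreflexive g)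
  (g_int : is_interval_graph g)
  (t : mtree T) (t_mpq : is_MPQ_tree g t)
  (x y : T) (xy : x != y)
  (secs : seq ({set T} * option (mtree T)))
  (hQ : is_node t (QNode secs))
  (hx : occurs x (QNode secs)) (hy : occurs y (QNode secs))
  (i : nat) (hi : i < size secs)
  (hcommon : forall j, j < size secs ->
     (x \in sec secs j) && (y \in sec secs j) = (j == i))
  (hclique : is_clique g (subV secs i)) :
  interval_edge g x y.
Proof.
have Hcons := cliques_consec t_mpq.
case: t_mpq => Hcnt [Hsec [Huniq [Hmax [_ Hok]]]].
set s := cliques t.
have HN : List.In (QNode secs) (nodes t).
  case: hQ => k Hk <-; exact: nth_In.
have Hqne : forall M, List.In M (nodes t) -> qne M.
  move=> M HM; have [k Hk Ek] := In_nth (PNode set0 [::]) HM.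
  have := Hok M (ex_intro2 _ _ k Hk Ek).
  case: M {HM Ek} => [//|[|st ss]] //= [H _] //.
set W := [set x; y].
have HxW : x \in W by rewrite !inE eqxx.
have HyW : y \in W by rewrite !inE eqxx orbT.
have [Ac [HA [D1 D2]]] : decomp_concl secs W t.
  apply: decomp => //; first by move=> v; rewrite !inE => /orP [] /eqP ->.
(* x and y span two sections *)
have Hother : forall z w, z \in W -> w \in W -> z != w -> occurs z (QNode secs) ->
    exists2 j, j < size secs & (z \in sec secs j) && (w \notin sec secs j).
  move=> z w HzW HwW Hzw Hz.
  have [l [r [/andP [Hlr Hrs] Hin]]] := Hsec z secs hQ Hz.
  have Hls : l < size secs by apply: ltn_trans Hlr Hrs.
  have Hzl : z \in sec secs l by rewrite Hin // leqnn (ltnW Hlr).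
  have Hzr : z \in sec secs r by rewrite Hin // leqnn (ltnW Hlr).
  have Hc : forall j, j < size secs -> j != i -> z \in sec secs j -> w \notin sec secs j.
    move=> j Hj Hji Hzj; apply/negP => Hwj; have := hcommon j Hj.
    move: HzW HwW Hzw Hzj Hwj; rewrite !inE => /orP [] /eqP -> /orP [] /eqP ->; rewrite ?eqxx //= => _ H1 H2.
    * by rewrite H1 H2 (negbTE Hji).
    * by rewrite H1 H2 (negbTE Hji).
  case: (l =P i) => [El|Nl].
  + exists r => //. rewrite Hzr Hc //. by rewrite -El neq_ltn Hlr orbT.
  + exists l => //. rewrite Hzl Hc //. exact/eqP.
have HnA : forall v, v \in W -> v \notin Ac := HA.
have Hsep : forall z w, z \in W -> w \in W -> z != w -> occurs z (QNode secs) ->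
    exists2 K, K \in s & (z \in K) && (w \notin K).
  move=> z w HzW HwW Hzw Hz; have [j Hj /andP [Hzj Hwj]] := Hother z w HzW HwW Hzw Hz.
  have [C [HCW HCs HK]] := D2 j Hj.
  exists (Ac :|: sec secs j :|: C) => //.
  rewrite !in_setU Hzj orbT /= negb_or negb_or (HA w HwW) (HCW w HwW) Hwj //.
have [K0 HK0 HxyK0] : exists2 K, K \in s & (x \in K) && (y \in K).
  have [C [HCW HCs HK]] := D2 i hi.
  exists (Ac :|: sec secs i :|: C) => //.
  have := hcommon i hi; rewrite eqxx => /andP [Hx Hy].
  by rewrite !in_setU Hx Hy !orbT.
have Hclq : forall K, K \in s -> is_clique g K by move=> K /Hmax [].
have Huniq2 : forall K1 K2, K1 \in s -> K2 \in s -> x \in K1 -> y \in K1 ->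
    x \in K2 -> y \in K2 -> K1 = K2.
  have Hdec : forall K, K \in s -> x \in K -> y \in K ->
      exists C : {set T}, C \subset subV secs i /\ K = Ac :|: sec secs i :|: C.
    move=> K HK HxK HyK.
    have [j [C [Hj HCW HCs EK]]] := D1 K HK (ex_intro2 _ _ x HxW HxK).
    have Hxj : x \in sec secs j.
      move: HxK; rewrite EK !in_setU (negbTE (HA x HxW)) (negbTE (HCW x HxW)) orbF //.
    have Hyj : y \in sec secs j.
      move: HyK; rewrite EK !in_setU (negbTE (HA y HyW)) (negbTE (HCW y HyW)) orbF //.
    have Eji : j = i by apply/eqP; rewrite -hcommon // Hxj Hyj.
    subst j.
    by exists C.
  move=> K1 K2 H1 H2 Hx1 Hy1 Hx2 Hy2.
  have [C1 [HC1 E1]] := Hdec K1 H1 Hx1 Hy1.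
  have [C2 [HC2 E2]] := Hdec K2 H2 Hx2 Hy2.
  have HU : is_clique g (K1 :|: K2).
    move=> u v Hu Hv Huv.
    case Hu1: (u \in K1); case Hv1: (v \in K1); first exact: (Hclq K1 H1).
    - case Hu2: (u \in K2).
        apply: (Hclq K2 H2) => //. by move: Hv; rewrite in_setU Hv1.
      have Hv2 : v \in K2 by move: Hv; rewrite in_setU Hv1.
      apply: hclique => //.
      + move: Hu1; rewrite E1 !in_setU => /orP [/orP [H|H]|H]; last exact: (subsetP HC1).
        * by move: Hu2; rewrite E2 !in_setU H.
        * by move: Hu2; rewrite E2 !in_setU H orbT.
      + move: Hv2; rewrite E2 !in_setU => /orP [/orP [H|H]|H]; last exact: (subsetP HC2).
        * by move: Hv1; rewrite E1 !in_setU H.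
        * by move: Hv1; rewrite E1 !in_setU H orbT.
    - have Hu2 : u \in K2 by move: Hu; rewrite in_setU Hu1.
      case Hv2: (v \in K2); first exact: (Hclq K2 H2).
      apply: hclique => //.
      + move: Hu2; rewrite E2 !in_setU => /orP [/orP [H|H]|H]; last exact: (subsetP HC2).
        * by move: Hu1; rewrite E1 !in_setU H.
        * by move: Hu1; rewrite E1 !in_setU H orbT.
      + move: Hv1; rewrite E1 !in_setU => /orP [/orP [H|H]|H]; last exact: (subsetP HC1).
        * by move: Hv2; rewrite E2 !in_setU H.
        * by move: Hv2; rewrite E2 !in_setU H orbT.
    - have Hu2 : u \in K2 by move: Hu; rewrite in_setU Hu1.
      have Hv2 : v \in K2 by move: Hv; rewrite in_setU Hv1.
      exact: (Hclq K2 H2).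
  have [_ M1] := (Hmax K1).1 H1; have [_ M2] := (Hmax K2).1 H2.
  rewrite -(M1 _ HU (subsetUl _ _)); exact: (M2 _ HU (subsetUr _ _)).
have Hgxy : g x y.
  by move: HxyK0 => /andP [Hx Hy]; apply: (Hclq K0 HK0).
split => //.
have Hcov : forall u v, u != v -> g u v -> exists2 K, K \in s & (u \in K) && (v \in K).
  move=> u v Huv Hg.
  have Hc : is_clique g [set u; v].
    move=> a b; rewrite !inE => /orP [] /eqP -> /orP [] /eqP ->; rewrite ?eqxx //.
    by rewrite g_sym.
  have [K [HK HsK]] := max_ext Hc.
  exists K; first exact/Hmax.
  by rewrite (subsetP HsK) ?(subsetP HsK) // !inE eqxx ?orbT.
have Hall : forall v, has (fun K : {set T} => v \in K) s.
  move=> v.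
  have Hc : is_clique g [set v] by move=> a b; rewrite !inE => /eqP -> /eqP ->; rewrite eqxx.
  have [K [HK HsK]] := max_ext Hc.
  apply/hasP; exists K; first exact/Hmax.
  by rewrite (subsetP HsK) // inE.
have Hadj := rep_adj Hcons Hclq Hcov Hall.
have Rx := range Hcons (Hall x); have Ry := range Hcons (Hall y).
have Hxs := hi_lt (Hall x).
set a := index K0 s.
have Ha : a < size s by rewrite index_mem.
have Ea : nth set0 s a = K0 by apply: nth_index.
have Hidx : forall j, (loR s x <= j <= hiR s x) && (loR s y <= j <= hiR s y) -> j = a.
  move=> j /andP [H1 H2].
  have Hj : j < size s by apply: leq_ltn_trans Hxs; case/andP: H1.
  rewrite -(Rx _ Hj) in H1; rewrite -(Ry _ Hj) in H2.
  have E : nth set0 s j = K0.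
    apply: Huniq2 => //; first exact: mem_nth. by case/andP: HxyK0. by case/andP: HxyK0.
  by rewrite /a -E index_uniq.
have Hax : loR s x <= a <= hiR s x by rewrite -Rx // Ea; case/andP: HxyK0.
have Hay : loR s y <= a <= hiR s y by rewrite -Ry // Ea; case/andP: HxyK0.
have yx : y != x by rewrite eq_sym.
have [Kx HKx /andP [HxKx HyKx]] := Hsep x y HxW HyW xy hx.
have [Ky HKy /andP [HyKy HxKy]] := Hsep y x HyW HxW yx hy.
have Hjx : index Kx s < size s by rewrite index_mem.
have Hjy : index Ky s < size s by rewrite index_mem.
have H3 : loR s x <= index Kx s <= hiR s x by rewrite -Rx // nth_index.
have H4 : ~~ (loR s y <= index Kx s <= hiR s y) by rewrite -Ry // nth_index.
have H5 : loR s y <= index Ky s <= hiR s y by rewrite -Ry // nth_index.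
have H6 : ~~ (loR s x <= index Ky s <= hiR s x) by rewrite -Rx // nth_index.
have Hlh : forall v, loR s v <= hiR s v by move=> v; apply: lo_le_hi.
case: (arith Hidx Hax Hay H3 H4 H5 H6) => E.
- exact: (double_rep xy Hlh Hadj E).
- apply: remove_edge_sym.
  exact: (double_rep yx Hlh Hadj E).
Qed.
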